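(* Let $p$ be a prime and $k\ge 0$ an integer, and let $T_{p,k}:=\{r\in\mathbb{Q}_{>0}: v_p(r)=0,\ v_p(r-1)\le k\}$. Then $$\chi(G(T_{p,k}))\le p^k(p-1).$$
   Context: For $R\subseteq\mathbb{Q}_{>0}\setminus\{1\}$, $G(R)$ is the graph with vertex set $\mathbb{N}=\{1,2,\dots\}$ and edge set $\{\{m,n\}: m/n\in R\}$. $\chi$ denotes chromatic number; $v_p$ is the $p$-adic valuation on $\mathbb{Q}$, $v_p(0)=\infty$. *)

(* Defs.v *)
From mathcomp Require Import all_boot all_order all_algebra.
Set Implicit Arguments. Unset Strict Implicit. Unset Printing Implicit Defensive.
Import Order.TTheory GRing.Theory Num.Theory.
Local Open Scope ring_scope.

(* p-adic valuation on Q, with v_p(0) = infinity encoded as None. *)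
Definition padic_val (p : nat) (r : rat) : option int :=
  if r == 0 then None
  else Some ((logn p `|numq r|%N)%:Z - (logn p `|denq r|%N)%:Z).

Definition val_le (v : option int) (k : int) : bool :=
  if v is Some z then z <= k else false.

Definition T_set (p k : nat) (r : rat) : Prop :=
  0 < r /\ padic_val p r = Some 0 /\ val_le (padic_val p (r - 1)) k%:Z.

Definition G_edge (R : rat -> Prop) (m n : nat) : Prop :=
  (0 < m)%N /\ (0 < n)%N /\ R (m%:R / n%:R).

Definition chi_le (R : rat -> Prop) (N : nat) : Prop :=
  exists c : nat -> 'I_N, forall m n : nat, G_edge R m n -> c m <> c n.

(* Main.v *)
Require Import Defs.
From mathcomp Require Import all_boot all_order all_algebra.
From mathcomp Require Import zify.
Import Order.TTheory GRing.Theory Num.Theory.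

Definition pp (p n : nat) := n %/ p ^ logn p n.
Definition col (p k n : nat) :=
  let u := pp p n %% p ^ k.+1 in (u %/ p) * (p - 1) + (u %% p).-1.

Lemma pp_spec p n : prime p -> 0 < n ->
  n = pp p n * p ^ logn p n /\ ~~ (p %| pp p n).
Proof.
move=> hp n0.
have hd : p ^ logn p n %| n by rewrite pfactor_dvdn.
have e : n = pp p n * p ^ logn p n by rewrite /pp divnK.
split => //.
have pp0 : 0 < pp p n.
  by case: (posnP (pp p n)) => // h; move: n0; rewrite {1}e h.
have p0 : 0 < p ^ logn p n by rewrite expn_gt0 prime_gt0.
have h := congr1 (logn p) e; rewrite lognM // pfactorK // in h.
have h0 : logn p (pp p n) = 0 by lia.
by rewrite -(expn1 p) pfactor_dvdn // h0.
Qed.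

Lemma col_mod p k n : prime p -> 0 < n -> 0 < (pp p n %% p ^ k.+1) %% p.
Proof.
move=> hp n0; have [_ hnd] := pp_spec p n hp n0.
rewrite (modn_dvdm _ (dvdn_exp (ltn0Sn k) (dvdnn p))) lt0n; apply: contra hnd => /eqP h.
by rewrite /dvdn h.
Qed.

Lemma col_lt p k n : prime p -> 0 < n -> col p k n < p ^ k * (p - 1).
Proof.
move=> hp n0; rewrite /col.
set u := pp p n %% p ^ k.+1.
have p1 : 1 < p := prime_gt1 hp.
have hu : u < p ^ k.+1 by rewrite ltn_mod expn_gt0 prime_gt0.
have hq : u %/ p < p ^ k by rewrite ltn_divLR ?prime_gt0 // -expnSr.
have hr : u %% p < p by rewrite ltn_mod prime_gt0.
have hr2 := col_mod p k n hp n0; rewrite -/u in hr2.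
have : (u %/ p).+1 * (p - 1) <= p ^ k * (p - 1) by rewrite leq_mul2r hq orbT.
rewrite mulSn.
have hr3 : (u %% p).-1 < p - 1 by rewrite -subn1 ltn_sub2r.
move: hr3; generalize (u %/ p * (p - 1)) (p ^ k * (p - 1)) ((u %% p).-1) => x y z.
lia.
Qed.

Lemma col_inj p k m n : prime p -> 0 < m -> 0 < n -> col p k m = col p k n ->
  pp p m %% p ^ k.+1 = pp p n %% p ^ k.+1.
Proof.
move=> hp m0 n0; rewrite /col.
have hm := col_mod p k m hp m0; have hn := col_mod p k n hp n0.
set u := pp p m %% _; set v := pp p n %% _ => e.
have p1 : 1 < p := prime_gt1 hp.
have d0 : 0 < p - 1 by rewrite subn_gt0.
have hd : forall q r, r < p - 1 -> (q * (p - 1) + r) %/ (p - 1) = q.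
  by move=> q r hr; rewrite divnMDl // divn_small // addn0.
have hm' : forall q r, r < p - 1 -> (q * (p - 1) + r) %% (p - 1) = r.
  by move=> q r hr; rewrite modnMDl modn_small.
have ru : (u %% p).-1 < p - 1 by rewrite -subn1 ltn_sub2r // ltn_pmod // prime_gt0.
have rv : (v %% p).-1 < p - 1 by rewrite -subn1 ltn_sub2r // ltn_pmod // prime_gt0.
have e1 := congr1 (divn^~ (p - 1)) e; rewrite /= !hd // in e1.
have e2 := congr1 (modn^~ (p - 1)) e; rewrite /= !hm' // in e2.
rewrite (divn_eq u p) (divn_eq v p) e1; congr (_ + _).
by rewrite -(prednK hm) -(prednK hn) e2.
Qed.
Local Open Scope ring_scope.
Lemma padic_frac (p : nat) (u : int) (w : nat) : u != 0 -> (0 < w)%N ->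
  padic_val p (u%:~R / w%:R) = Some ((logn p `|u|)%:Z - (logn p w)%:Z).
Proof.
move=> u0 w0; set r := _ / _.
have r0 : r != 0 by rewrite mulf_eq0 negb_or intr_eq0 u0 invr_eq0 pnatr_eq0 -lt0n w0.
rewrite /padic_val (negbTE r0); congr Some.
have key : numq r * w%:Z = u * denq r.
  apply: (@intr_inj rat); rewrite !rmorphM /=.
  have := divq_num_den r; rewrite {2}/r => /eqP.
  rewrite eqr_div ?intr_eq0 ?denq_neq0 ?pnatr_eq0 -?lt0n //.
  by move/eqP; rewrite pmulrn.
have /(congr1 absz) := key; rewrite !abszM /= => key2.
have nq0 : (0 < `|numq r|)%N by rewrite absz_gt0 numq_eq0.
have dq0 : (0 < `|denq r|)%N by rewrite absz_gt0 denq_neq0.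
have uq0 : (0 < `|u|)%N by rewrite absz_gt0.
have /(congr1 (logn p)) := key2; rewrite !lognM //.
lia.
Qed.

From mathcomp Require Import ring.

Theorem proposition2p3 (p k : nat) (hp : prime p) :
  chi_le (T_set p k) (p ^ k * (p - 1)).
Proof.
have N0 : (0 < p ^ k * (p - 1))%N.
  by rewrite muln_gt0 expn_gt0 prime_gt0 // subn_gt0 prime_gt1.
exists (fun n => Ordinal (ltn_pmod (col p k n) N0)).
move=> m n [m0 [n0 [r0 [h1 h2]]]] /(congr1 val) /= e.
rewrite !modn_small ?col_lt // in e.
have eq := col_inj p k m n hp m0 n0 e.
have mz : (m%:Z != 0) by rewrite -lt0n.
have cm : (m%:R : rat) = (m%:Z)%:~R by [].
rewrite cm padic_frac // in h1.
case: h1 => /= /eqP; rewrite subr_eq0 => /eqP [] hlog.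
case: (eqVneq m n) => [emn | mn].
  by move: h2; rewrite emn divff ?subrr // pnatr_eq0 -lt0n.
have hr : (m%:R / n%:R - 1 : rat) = ((m%:Z - n%:Z)%:~R) / n%:R.
  have cn : (n%:R : rat) = (n%:Z)%:~R by [].
  rewrite rmorphB /= -cm -cn mulrBl divff // pnatr_eq0 -lt0n //.
have mnz : (m%:Z - n%:Z != 0) by rewrite subr_eq0 eqz_nat.
rewrite hr padic_frac //= in h2.
set q := (p ^ k.+1)%N.
have em := (pp_spec p m hp m0).1; have en := (pp_spec p n hp n0).1.
set a := pp p m in em eq; set b := pp p n in en eq.
have ha := div.divn_eq a q; have hb := div.divn_eq b q; rewrite eq in ha.
have hz : (m%:Z - n%:Z = ((a %/ q)%N%:Z - (b %/ q)%N%:Z) * (q * p ^ logn p n)%:Z).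
  move: (a %/ q)%N (b %/ q)%N (b %% q)%N ha hb => x y r ha hb.
  rewrite {1}em {1}en hlog ha hb !PoszM !PoszD !PoszM; ring.
have hd : (q * p ^ logn p n %| `|(m%:Z - n%:Z)%R|)%N.
  by rewrite hz abszM absz_nat dvdn_mull.
rewrite -expnD pfactor_dvdn // ?absz_gt0 // in hd.
move: h2 hd; lia.
Qed.
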